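(* Let $n,m$ be positive integers and $\mathbf a,\mathbf b\in\mathbb N^n$. Then the $m$th Pitman--Stanley polytope $\mathrm{PS}_n^m(\mathbf a,\mathbf b)$ is integrally equivalent to the flow polytope $\mathcal F_{G(n,m)}(\mathbf a,\mathbf b)$.
   Context: For $\mathbf a,\mathbf b\in\mathbb N^n$, $\mathrm{PS}_n^m(\mathbf a,\mathbf b)$ is the set of real matrices $(x_{ij})_{1\le i\le n,\,1\le j\le m}$ with nonnegative entries such that for every $i=1,\dots,n$: $$b_1+\cdots+b_i\le \sum_{k=1}^i x_{km}\le \sum_{k=1}^i x_{k,m-1}\le\cdots\le \sum_{k=1}^i x_{k1}\le a_1+\cdots+a_i .$$ $G(n,m)$ is the directed graph with vertex set $\{(i,j):1\le i\le n,\ 0\le j\le m\}\cup\{s\}$ and edges $((i,j),(i,j+1))$ for $1\le i\le n$, $0\le j\le m-1$; $((i,j),(i+1,j))$ for $1\le i\le n-1$, $0\le j\le m$; and $((n,j),s)$ for $0\le j\le m$. The flow polytope $\mathcal F_{G(n,m)}(\mathbf a,\mathbf b)\subset\mathbb R^{E(G(n,m))}$ is the set of assignments $f:E\to\mathbb R_{\ge0}$ such that at every vertex $v$, (total flow on edges leaving $v$) $-$ (total flow on edges entering $v$) equals the netflow of $v$, where vertex $(i,0)$ has netflow $a_i$, vertex $(i,m)$ has netflow $-b_i$, the sink $s$ has netflow $-\sum_i a_i+\sum_i b_i$, and all other vertices have netflow $0$. Two lattice polytopes $P\subset\mathbb R^p$, $Q\subset\mathbb R^q$ are integrally equivalent if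 there is an affine map $\Phi:\mathbb R^p\to\mathbb R^q$ restricting to a bijection $P\to Q$ that preserves the lattice (i.e. induces a bijection between the integer points of the affine spans of $P$ and $Q$). *)

(* Defs.v *)
From HB Require Import structures.
From mathcomp Require Import all_boot all_order all_algebra.
From mathcomp Require Import reals.
Set Implicit Arguments. Unset Strict Implicit. Unset Printing Implicit Defensive.
Import Order.TTheory GRing.Theory Num.Theory.
Local Open Scope ring_scope.

Section Defs.
Variable R : realFieldType.

Definition int_point (T : finType) (x : T -> R) : Prop :=
  forall t, exists z : int, x t = z%:~R.

Definition aff_span (T : finType) (P : (T -> R) -> Prop) (x : T -> R) : Prop :=
  exists (k : nat) (p : 'I_k -> (T -> R)) (l : 'I_k -> R),
      (forall i, P (p i)) /\ (\sum_(i < k) l i = 1) /\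
    (forall t, x t = \sum_(i < k) l i * p i t).

Definition affine_map (T1 T2 : finType) (A : T2 -> T1 -> R) (c : T2 -> R)
  (x : T1 -> R) : T2 -> R :=
  fun t => c t + \sum_(s : T1) A t s * x s.

Definition integrally_equivalent (T1 T2 : finType)
  (P : (T1 -> R) -> Prop) (Q : (T2 -> R) -> Prop) : Prop :=
  exists (A : T2 -> T1 -> R) (c : T2 -> R),
    let Phi := affine_map A c in
    ((forall x, P x -> Q (Phi x)) /\
     (forall x y, P x -> P y -> Phi x =1 Phi y -> x =1 y) /\
     (forall y, Q y -> exists2 x, P x & Phi x =1 y)) /\
    ((forall x, aff_span P x -> int_point x ->
                aff_span Q (Phi x) /\ int_point (Phi x)) /\
     (forall x y, aff_span P x -> int_point x -> aff_span P y -> int_point y ->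
                  Phi x =1 Phi y -> x =1 y) /\
     (forall y, aff_span Q y -> int_point y ->
                exists2 x, aff_span P x /\ int_point x & Phi x =1 y)).

(* Rows i : 'I_n (paper's i = i+1), columns j : 'I_m (paper's j = j+1). *)

Definition psum (n m : nat) (x : 'I_n * 'I_m -> R) (i : 'I_n) (j : 'I_m) : R :=
  \sum_(k < n | (k <= i)%N) x (k, j).

Definition natsum (n : nat) (a : 'I_n -> nat) (i : 'I_n) : R :=
  (\sum_(k < n | (k <= i)%N) a k)%:R.

Definition PS (n m : nat) (a b : 'I_n -> nat) (x : 'I_n * 'I_m -> R) : Prop :=
  (forall p, 0 <= x p) /\
  forall i : 'I_n,
    (forall j : 'I_m, j.+1 = m -> natsum b i <= psum x i j) /\
    (forall j j' : 'I_m, j'.+1 = j -> psum x i j <= psum x i j') /\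
    (forall j : 'I_m, j = 0%N :> nat -> psum x i j <= natsum a i).

(* Vertices (i,j) (paper: 1<=i<=n, 0<=j<=m) are encoded as Some (i-1, j);
   the sink s is None. *)
Definition vertex := option (nat * nat).

(* Edges: horizontal ((i,j),(i,j+1)), vertical ((i,j),(i+1,j)), sink ((n,j),s) *)
Definition edge (n m : nat) : finType :=
  (('I_n * 'I_m) + ('I_n.-1 * 'I_m.+1) + 'I_m.+1)%type.

Definition etail (n m : nat) (e : edge n m) : vertex :=
  match e with
  | inl (inl (i, j)) => Some (val i, val j)
  | inl (inr (i, j)) => Some (val i, val j)
  | inr j => Some (n.-1, val j)
  end.

Definition ehead (n m : nat) (e : edge n m) : vertex :=
  match e with
  | inl (inl (i, j)) => Some (val i, (val j).+1)
  | inl (inr (i, j)) => Some ((val i).+1, val j)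
  | inr j => None
  end.

Definition vertex_of (n m : nat) (v : option ('I_n * 'I_m.+1)) : vertex :=
  match v with Some (i, j) => Some (val i, val j) | None => None end.

Definition netflow (n m : nat) (a b : 'I_n -> nat)
  (v : option ('I_n * 'I_m.+1)) : R :=
  match v with
  | Some (i, j) =>
      if val j == 0%N then (a i)%:R
      else if val j == m then - (b i)%:R else 0
  | None => - (\sum_(i < n) (a i)%:R) + \sum_(i < n) (b i)%:R
  end.

Definition flow_polytope (n m : nat) (a b : 'I_n -> nat)
  (f : edge n m -> R) : Prop :=
  (forall e, 0 <= f e) /\
  forall v : option ('I_n * 'I_m.+1),
    \sum_(e : edge n m | etail e == vertex_of v) f e
    - \sum_(e : edge n m | ehead e == vertex_of v) f e = @netflow n m a b v.

End Defs.

(* Main.v *)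
Require Import Defs.
From HB Require Import structures.
From mathcomp Require Import all_boot all_order all_algebra.
From mathcomp Require Import reals.
From mathcomp Require Import ring lra zify.
Set Implicit Arguments. Unset Strict Implicit. Unset Printing Implicit Defensive.
Import Order.TTheory GRing.Theory Num.Theory.
Local Open Scope ring_scope.


Definition coef (R : realType) (p q : nat) (k j : nat) (s : 'I_p * 'I_q) : R :=
  ((s.1 == k :> nat) && (s.2 == j :> nat))%:R.

Definition sel2 (R : realType) (p q : nat) (x : 'I_p * 'I_q -> R) (k j : nat) : R :=
  \sum_s coef R k j s * x s.

Definition sel1 (R : realType) (q : nat) (x : 'I_q -> R) (j : nat) : R :=
  \sum_(t : 'I_q) (t == j :> nat)%:R * x t.

Lemma sel2_in (R : realType) p q (x : 'I_p * 'I_q -> R) (i : 'I_p) (j : 'I_q) :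
  sel2 x i j = x (i, j).
Proof.
rewrite /sel2 (bigD1 (i, j)) //= /coef /= !eqxx mul1r big1 ?addr0 //.
move=> [i' j'] /= H.
have -> : ((i' == i :> nat) && (j' == j :> nat)) = false.
  apply/negbTE; apply: contra H => /andP [/eqP h1 /eqP h2].
  by apply/eqP; congr pair; apply: val_inj.
by rewrite mul0r.
Qed.

Lemma sel2_out (R : realType) p q (x : 'I_p * 'I_q -> R) (i j : nat) :
  (p <= i)%N || (q <= j)%N -> sel2 x i j = 0.
Proof.
move=> H; rewrite /sel2 big1 // => [[i' j']] _; rewrite /coef /=.
have -> : ((i' == i :> nat) && (j' == j :> nat)) = false.
  apply/negbTE/negP => /andP [/eqP h1 /eqP h2].
  move: H (ltn_ord i') (ltn_ord j'); rewrite h1 h2; lia.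
by rewrite mul0r.
Qed.

Lemma sel1_in (R : realType) q (x : 'I_q -> R) (j : 'I_q) : sel1 x j = x j.
Proof.
rewrite /sel1 (bigD1 j) //= eqxx mul1r big1 ?addr0 // => t H.
have -> : (t == j :> nat) = false by apply/negbTE.
by rewrite mul0r.
Qed.

Lemma sel1_out (R : realType) q (x : 'I_q -> R) (j : nat) : (q <= j)%N -> sel1 x j = 0.
Proof.
move=> H; rewrite /sel1 big1 // => t _.
have -> : (t == j :> nat) = false.
  by apply/negbTE/negP => /eqP h; move: (ltn_ord t); rewrite h; lia.
by rewrite mul0r.
Qed.


Definition Psi (R : realType) n m (f : edge n m -> R) : 'I_n * 'I_m -> R :=
  fun s => f (inl (inl s)).
Definition fv (R : realType) n m (f : edge n m -> R) (i j : nat) : R :=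
  sel2 (fun s : 'I_n.-1 * 'I_m.+1 => f (inl (inr s))) i j.
Definition fs (R : realType) n m (f : edge n m -> R) (j : nat) : R :=
  sel1 (fun t : 'I_m.+1 => f (inr t)) j.

Lemma some_pair_eq (a b c d : nat) : (Some (a,b) == Some (c,d) :> vertex) = (a == c) && (b == d).
Proof. by []. Qed.
Lemma some_none (a b : nat) : (Some (a,b) == None :> vertex) = false.
Proof. by []. Qed.

Lemma out_eq (R : realType) n m (f : edge n m -> R) (i j : nat) :
  \sum_(e : edge n m | etail e == Some (i, j)) f e =
  sel2 (Psi f) i j + fv f i j + (i == n.-1)%:R * fs f j.
Proof.
rewrite /edge !big_sumType /=.
rewrite /fv /fs /sel2 /sel1 /Psi.
congr (_ + _); first congr (_ + _).
- rewrite big_mkcond; apply: eq_bigr => -[i' j'] _ /=.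
  rewrite some_pair_eq /coef /=. by case: ifP; rewrite ?mul1r ?mul0r.
- rewrite big_mkcond; apply: eq_bigr => -[i' j'] _ /=.
  rewrite some_pair_eq /coef /=. by case: ifP; rewrite ?mul1r ?mul0r.
- rewrite big_mkcond mulr_sumr; apply: eq_bigr => t _ /=.
  rewrite some_pair_eq eq_sym.
  by case: (i == n.-1); case: (t == j :> nat); rewrite ?mul1r ?mul0r.
Qed.

Lemma in_eq (R : realType) n m (f : edge n m -> R) (i j : nat) :
  \sum_(e : edge n m | ehead e == Some (i, j)) f e =
  (if j is j'.+1 then sel2 (Psi f) i j' else 0) +
  (if i is i'.+1 then fv f i' j else 0).
Proof.
rewrite /edge !big_sumType /=.
rewrite /fv /sel2 /Psi.
rewrite [X in _ + X]big1 ?addr0; last by move=> t; rewrite /= eq_sym some_none.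
congr (_ + _).
- rewrite big_mkcond; case: j => [|j].
    by apply: big1 => -[i' j'] _ /=; rewrite some_pair_eq andbF.
  apply: eq_bigr => -[i' j'] _ /=.
  rewrite some_pair_eq /coef /=. by case: ifP; rewrite ?mul1r ?mul0r.
- rewrite big_mkcond; case: i => [|i].
    by apply: big1 => -[i' j'] _ /=; rewrite ?some_pair_eq.
  apply: eq_bigr => -[i' j'] _ /=.
  rewrite some_pair_eq /coef /=. by case: ifP; rewrite ?mul1r ?mul0r.
Qed.

Lemma out_none (R : realType) n m (f : edge n m -> R) :
  \sum_(e : edge n m | etail e == None) f e = 0.
Proof.
rewrite /edge !big_sumType /= !big1 ?addr0 //; by move=> -[].
Qed.

Lemma in_none (R : realType) n m (f : edge n m -> R) :
  \sum_(e : edge n m | ehead e == None) f e = \sum_(t : 'I_m.+1) f (inr t).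
Proof.
rewrite /edge !big_sumType /=.
rewrite [X in X + _ + _]big1; last by move=> -[].
rewrite [X in _ + X + _]big1; last by move=> -[].
by rewrite !add0r.
Qed.


Definition Xc (R : realType) n m (x : 'I_n * 'I_m -> R) (i j : nat) : R :=
  \sum_(k < i.+1) sel2 x k j.
Definition Xp (R : realType) n m (x : 'I_n * 'I_m -> R) (i j : nat) : R :=
  if j is j'.+1 then Xc x i j' else 0.
Definition An (R : realType) n (a : 'I_n -> nat) (i : nat) : R :=
  (\sum_(t < n | (t <= i)%N) a t)%:R.
Definition an (R : realType) n (a : 'I_n -> nat) (k : nat) : R :=
  (\sum_(t < n | t == k :> nat) a t)%:R.
Definition vval (R : realType) n m (a b : 'I_n -> nat) (x : 'I_n * 'I_m -> R) (i j : nat) : R :=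
  (j == 0)%:R * An R a i + Xp x i j - Xc x i j - (j == m)%:R * An R b i.

Lemma An_S (R : realType) n (a : 'I_n -> nat) i : An R a i.+1 = An R a i + an R a i.+1.
Proof.
rewrite /An /an -natrD; congr (_%:R).
rewrite big_mkcond [X in (X + _)%N]big_mkcond [X in (_ + X)%N]big_mkcond -big_split /=; apply: eq_bigr => t _.
case: (ltngtP t i.+1) => h.
- have -> : (t <= i)%N by lia. by rewrite addn0.
- by have -> : (t <= i)%N = false by lia.
- have -> : (t <= i)%N = false by lia. by rewrite add0n.
Qed.

Lemma An_0 (R : realType) n (a : 'I_n -> nat) : An R a 0 = an R a 0.
Proof. by rewrite /An /an; apply: congr1; apply: eq_bigl => t; rewrite leqn0. Qed.

Lemma an_ord (R : realType) n (a : 'I_n -> nat) (t : 'I_n) : an R a t = (a t)%:R.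
Proof. by rewrite /an (big_pred1 t). Qed.

Lemma Xc_S (R : realType) n m (x : 'I_n * 'I_m -> R) i j :
  Xc x i.+1 j = Xc x i j + sel2 x i.+1 j.
Proof. by rewrite /Xc big_ord_recr. Qed.

Lemma Xc_0 (R : realType) n m (x : 'I_n * 'I_m -> R) j : Xc x 0 j = sel2 x 0 j.
Proof. by rewrite /Xc big_ord1. Qed.

Definition prevh (R : realType) n m (x : 'I_n * 'I_m -> R) (i j : nat) : R :=
  if j is j'.+1 then sel2 x i j' else 0.

Lemma vval_rec (R : realType) n m (a b : 'I_n -> nat) (x : 'I_n * 'I_m -> R) i j :
  sel2 x i j + vval a b x i j - prevh x i j
  - (if i is i'.+1 then vval a b x i' j else 0)
  = (j == 0)%:R * an R a i - (j == m)%:R * an R b i.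
Proof.
rewrite /vval /Xp /prevh.
case: i => [|i].
  rewrite !An_0; case: j => [|j]; rewrite ?Xc_0; lra.
rewrite !An_S; case: j => [|j]; rewrite ?Xc_S; lra.
Qed.


Definition Arow (R : realType) n m (i j : nat) (s : 'I_n * 'I_m) : R :=
  \sum_(k < i.+1) ((if j is j'.+1 then coef R k j' s else 0) - coef R k j s).
Definition crow (R : realType) n m (a b : 'I_n -> nat) (i j : nat) : R :=
  (j == 0)%:R * An R a i - (j == m)%:R * An R b i.

Definition Acoef (R : realType) n m (e : edge n m) (s : 'I_n * 'I_m) : R :=
  match e with
  | inl (inl (i, j)) => (s == (i, j))%:R
  | inl (inr (i, j)) => Arow R i j s
  | inr j => Arow R n.-1 j s
  end.
Definition cvec (R : realType) n m (a b : 'I_n -> nat) (e : edge n m) : R :=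
  match e with
  | inl (inl _) => 0
  | inl (inr (i, j)) => crow R m a b i j
  | inr j => crow R m a b n.-1 j
  end.
Definition Phi (R : realType) n m (a b : 'I_n -> nat) :=
  affine_map (@Acoef R n m) (cvec R a b).
Arguments Phi R {n m} a b.

Lemma row_val (R : realType) n m (a b : 'I_n -> nat) (x : 'I_n * 'I_m -> R) i j :
  crow R m a b i j + \sum_s Arow R i j s * x s = vval a b x i j.
Proof.
rewrite /vval /crow /Arow.
under eq_bigr do rewrite mulr_suml.
rewrite exchange_big /=.
under eq_bigr do (under eq_bigr do rewrite mulrBl; rewrite sumrB).
rewrite sumrB.
have -> : \sum_(k < i.+1) \sum_s coef R k j s * x s = Xc x i j by [].
have -> : \sum_(k < i.+1) \sum_s (if j is j'.+1 then coef R k j' s else 0) * x s = Xp x i j.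
  rewrite /Xp /Xc; case: j => [|j].
    by rewrite big1 // => k _; rewrite big1 // => s _; rewrite mul0r.
  by [].
lra.
Qed.

Lemma Phi_h (R : realType) n m (a b : 'I_n -> nat) (x : 'I_n * 'I_m -> R) (i : 'I_n) (j : 'I_m) :
  Phi R a b x (inl (inl (i, j))) = x (i, j).
Proof.
rewrite /Phi /affine_map /= add0r (bigD1 (i, j)) //= eqxx mul1r big1 ?addr0 //.
by move=> s /negbTE ->; rewrite mul0r.
Qed.

Lemma Phi_v (R : realType) n m (a b : 'I_n -> nat) (x : 'I_n * 'I_m -> R) (i : 'I_n.-1) (j : 'I_m.+1) :
  Phi R a b x (inl (inr (i, j))) = vval a b x i j.
Proof. exact: row_val. Qed.

Lemma Phi_s (R : realType) n m (a b : 'I_n -> nat) (x : 'I_n * 'I_m -> R) (j : 'I_m.+1) :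
  Phi R a b x (inr j) = vval a b x n.-1 j.
Proof. exact: row_val. Qed.

Lemma Psi_Phi (R : realType) n m (a b : 'I_n -> nat) (x : 'I_n * 'I_m -> R) :
  Psi (Phi R a b x) =1 x.
Proof. by move=> [i j]; rewrite /Psi Phi_h. Qed.


Definition fw (R : realType) n m (f : edge n m -> R) (i j : nat) : R :=
  fv f i j + (i == n.-1)%:R * fs f j.


Lemma sel2_ext (R : realType) p q (x y : 'I_p * 'I_q -> R) i j :
  x =1 y -> sel2 x i j = sel2 y i j.
Proof. by move=> H; apply: eq_bigr => s _; rewrite H. Qed.

Lemma cons_form (R : realType) n m (f : edge n m -> R) (i : 'I_n) (j : 'I_m.+1) :
  \sum_(e : edge n m | etail e == vertex_of (Some (i, j))) f e
  - \sum_(e : edge n m | ehead e == vertex_of (Some (i, j))) f e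
  = sel2 (Psi f) i j + fw f i j - prevh (Psi f) i j
    - (if val i is i'.+1 then fw f i' j else 0).
Proof.
rewrite /= out_eq in_eq /fw /prevh addrA.
rewrite opprD addrA; congr (_ - _).
case: i => [[|i] Hi] //=.
have -> : (i == n.-1) = false by apply/negbTE; lia.
by rewrite mul0r addr0.
Qed.

Lemma net_some (R : realType) n m (a b : 'I_n -> nat) (i : 'I_n) (j : 'I_m.+1) :
  (0 < m)%N ->
  @netflow R n m a b (Some (i, j)) = (j == 0 :> nat)%:R * an R a i - (j == m :> nat)%:R * an R b i.
Proof.
move=> Hm; rewrite /netflow !an_ord.
case: j => [[|j] Hj] /=.
  have -> : (0 == m) = false by apply/negbTE; lia.
  by rewrite mul1r mul0r subr0.
case: (j.+1 == m); rewrite ?mul0r ?mul1r ?sub0r ?subr0 ?oppr0 //.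
Qed.

Lemma fw_Phi (R : realType) n m (a b : 'I_n -> nat) (x : 'I_n * 'I_m -> R) (i : nat) (j : 'I_m.+1) :
  (i < n)%N -> fw (Phi R a b x) i j = vval a b x i j.
Proof.
move=> Hi; rewrite /fw /fv /fs.
case: (ltnP i n.-1) => Hi'.
  have -> : (i == n.-1) = false by apply/negbTE; lia.
  rewrite mul0r addr0.
  by rewrite (sel2_in (fun s : 'I_n.-1 * 'I_m.+1 => Phi R a b x (inl (inr s))) (Ordinal Hi') j) Phi_v.
have -> : i = n.-1 by lia.
rewrite eqxx mul1r sel2_out; last by rewrite leqnn.
by rewrite add0r sel1_in Phi_s.
Qed.

Lemma Phi_cons_some (R : realType) n m (a b : 'I_n -> nat) (x : 'I_n * 'I_m -> R)
  (i : 'I_n) (j : 'I_m.+1) : (0 < m)%N ->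
  \sum_(e : edge n m | etail e == vertex_of (Some (i, j))) Phi R a b x e
  - \sum_(e : edge n m | ehead e == vertex_of (Some (i, j))) Phi R a b x e
  = @netflow R n m a b (Some (i, j)).
Proof.
move=> Hm; rewrite cons_form net_some // fw_Phi //.
have -> : (if val i is i'.+1 then fw (Phi R a b x) i' j else 0) =
          (if val i is i'.+1 then vval a b x i' j else 0).
  case: i => [[|i] Hi] //=; rewrite fw_Phi //; lia.
rewrite /prevh (sel2_ext _ _ (Psi_Phi a b x)).
have -> : (if val j is j'.+1 then sel2 (Psi (Phi R a b x)) i j' else 0) =
          (if val j is j'.+1 then sel2 x i j' else 0).
  by case: (val j) => // j'; apply: sel2_ext; apply: Psi_Phi.
exact: vval_rec.
Qed.


Lemma sum_vval (R : realType) n m (a b : 'I_n -> nat) (x : 'I_n * 'I_m -> R) i :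
  \sum_(t < m.+1) vval a b x i t = An R a i - An R b i.
Proof.
have e : forall t : 'I_m.+1, vval a b x i t =
   ((t == 0 :> nat)%:R * An R a i - (t == m :> nat)%:R * An R b i) + (Xp x i t - Xc x i t).
  by move=> t; rewrite /vval; lra.
under eq_bigr do rewrite e.
rewrite big_split sumrB /=.
have -> : \sum_(t < m.+1) (t == 0 :> nat)%:R * An R a i = An R a i.
  rewrite big_ord_recl /= mul1r big1 ?addr0 // => t _.
  by rewrite mul0r.
have -> : \sum_(t < m.+1) (t == m :> nat)%:R * An R b i = An R b i.
  rewrite big_ord_recr /= eqxx mul1r big1 ?add0r // => t _.
  have -> : (widen_ord (leqnSn m) t == m :> nat) = false.
    by apply/negbTE; rewrite /=; move: (ltn_ord t); lia.
  by rewrite mul0r.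
have -> : \sum_(t < m.+1) (Xp x i t - Xc x i t) = 0.
  rewrite -(big_mkord xpredT (fun t => Xp x i t - Xc x i t)).
  rewrite (@telescope_sumr_eq _ 0 m.+1 (fun t => - Xp x i t)) //.
    rewrite /Xp /= oppr0 subr0 /Xc big1 ?oppr0 // => k _.
    by apply: sel2_out; rewrite leqnn orbT.
  by move=> k _; rewrite /Xp opprK addrC.
by rewrite addr0.
Qed.

Lemma An_last (R : realType) n (a : 'I_n -> nat) :
  An R a n.-1 = \sum_(i < n) (a i)%:R.
Proof.
rewrite /An natr_sum; apply: eq_bigl => t.
by move: (ltn_ord t) => h; apply/idP; lia.
Qed.

Lemma Phi_cons_none (R : realType) n m (a b : 'I_n -> nat) (x : 'I_n * 'I_m -> R) :
  \sum_(e : edge n m | etail e == vertex_of (@None ('I_n * 'I_m.+1))) Phi R a b x e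
  - \sum_(e : edge n m | ehead e == vertex_of (@None ('I_n * 'I_m.+1))) Phi R a b x e
  = @netflow R n m a b None.
Proof.
rewrite /= out_none in_none /netflow.
rewrite (eq_bigr (fun t : 'I_m.+1 => vval a b x n.-1 t)); last by move=> t _; exact: Phi_s.
rewrite sum_vval !An_last; lra.
Qed.

Lemma Phi_flow (R : realType) n m (a b : 'I_n -> nat) (x : 'I_n * 'I_m -> R) :
  (0 < m)%N ->
  forall v : option ('I_n * 'I_m.+1),
    \sum_(e : edge n m | etail e == vertex_of v) Phi R a b x e
    - \sum_(e : edge n m | ehead e == vertex_of v) Phi R a b x e = @netflow R n m a b v.
Proof.
move=> Hm [[i j]|].
  exact: Phi_cons_some.
exact: Phi_cons_none.
Qed.

Lemma fw_Psi (R : realType) n m (a b : 'I_n -> nat) (f : edge n m -> R) :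
  (0 < m)%N ->
  (forall (i : 'I_n) (j : 'I_m.+1),
    \sum_(e : edge n m | etail e == vertex_of (Some (i, j))) f e
    - \sum_(e : edge n m | ehead e == vertex_of (Some (i, j))) f e
    = @netflow R n m a b (Some (i, j))) ->
  forall (i : nat) (j : 'I_m.+1), (i < n)%N -> fw f i j = vval a b (Psi f) i j.
Proof.
move=> Hm Hc i j; elim: i => [|i IH] Hi.
  have := Hc (Ordinal Hi) j; rewrite cons_form net_some //= => H.
  have := vval_rec a b (Psi f) 0 j; rewrite /= -H; lra.
have := Hc (Ordinal Hi) j; rewrite cons_form net_some //= => H.
have := vval_rec a b (Psi f) i.+1 j; rewrite /= -H IH; last by lia.
lra.
Qed.

Lemma Phi_Psi (R : realType) n m (a b : 'I_n -> nat) (f : edge n m -> R) :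
  (0 < n)%N -> (0 < m)%N ->
  (forall (i : 'I_n) (j : 'I_m.+1),
    \sum_(e : edge n m | etail e == vertex_of (Some (i, j))) f e
    - \sum_(e : edge n m | ehead e == vertex_of (Some (i, j))) f e
    = @netflow R n m a b (Some (i, j))) ->
  Phi R a b (Psi f) =1 f.
Proof.
move=> Hn Hm Hc [[[i j]|[i j]]|j].
- by rewrite Phi_h.
- rewrite Phi_v -fw_Psi //; last by move: (ltn_ord i); lia.
  rewrite /fw.
  have -> : (i == n.-1 :> nat) = false by apply/negbTE; move: (ltn_ord i); lia.
  by rewrite mul0r addr0 /fv (sel2_in (fun s : 'I_n.-1 * 'I_m.+1 => f (inl (inr s))) i j).
- rewrite Phi_s -fw_Psi //; last by lia.
  rewrite /fw eqxx mul1r /fv sel2_out ?leqnn // add0r /fs.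
  exact: (sel1_in (fun t : 'I_m.+1 => f (inr t)) j).
Qed.


Lemma psum_Xc (R : realType) n m (x : 'I_n * 'I_m -> R) (i : 'I_n) (j : 'I_m) :
  psum x i j = Xc x i j.
Proof.
rewrite /Xc (big_ord_widen n (fun k : nat => sel2 x k j) (ltn_ord i)) /psum.
by apply: eq_big => // k _; rewrite sel2_in.
Qed.

Lemma Xc_m (R : realType) n m (x : 'I_n * 'I_m -> R) i : Xc x i m = 0.
Proof. by rewrite /Xc big1 // => k _; apply: sel2_out; rewrite leqnn orbT. Qed.

Lemma vval_0 (R : realType) n m (a b : 'I_n -> nat) (x : 'I_n * 'I_m -> R) i :
  (0 < m)%N -> vval a b x i 0 = An R a i - Xc x i 0.
Proof.
move=> Hm; rewrite /vval /Xp.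
have -> : (0 == m) = false by apply/negbTE; lia.
rewrite /=; lra.
Qed.

Lemma vval_S (R : realType) n m (a b : 'I_n -> nat) (x : 'I_n * 'I_m -> R) i j :
  (j.+1 < m)%N -> vval a b x i j.+1 = Xc x i j - Xc x i j.+1.
Proof.
move=> Hm; rewrite /vval /Xp.
have -> : (j.+1 == m) = false by apply/negbTE; lia.
rewrite /=; lra.
Qed.

Lemma vval_m (R : realType) n m (a b : 'I_n -> nat) (x : 'I_n * 'I_m -> R) i j :
  j.+1 = m -> vval a b x i j.+1 = Xc x i j - An R b i.
Proof.
move=> Hm; rewrite /vval /Xp.
have -> : (j.+1 == m) = true by apply/eqP.
have -> : Xc x i j.+1 = 0.
  by rewrite /Xc big1 // => k _; apply: sel2_out; rewrite Hm leqnn orbT.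
rewrite /=; lra.
Qed.

Lemma PS_vval (R : realType) n m (a b : 'I_n -> nat) (x : 'I_n * 'I_m -> R) :
  (0 < m)%N -> PS a b x ->
  forall i j, (i < n)%N -> (j <= m)%N -> 0 <= vval a b x i j.
Proof.
move=> Hm [Hx Hps] i j Hi Hj.
have [H1 [H2 H3]] := Hps (Ordinal Hi).
case: j Hj => [|j] Hj.
  rewrite vval_0 // subr_ge0.
  have := H3 (Ordinal Hm) erefl; rewrite psum_Xc /=.
  by [].
case: (ltnP j.+1 m) => Hjm.
  rewrite vval_S // subr_ge0.
  have := H2 (Ordinal Hjm) (Ordinal (ltnW Hjm)) erefl.
  by rewrite !psum_Xc.
have Hjm' : j.+1 = m by lia.
have Hj' : (j < m)%N by lia.
rewrite vval_m // subr_ge0.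
have := H1 (Ordinal Hj') Hjm'.
by rewrite psum_Xc.
Qed.

Lemma vval_PS (R : realType) n m (a b : 'I_n -> nat) (x : 'I_n * 'I_m -> R) :
  (0 < m)%N -> (forall s, 0 <= x s) ->
  (forall i j, (i < n)%N -> (j <= m)%N -> 0 <= vval a b x i j) -> PS a b x.
Proof.
move=> Hm Hx Hv; split => // i; split; [|split].
- move=> j Hj.
  have := Hv i j.+1 (ltn_ord i) (eq_leq Hj).
  rewrite vval_m // subr_ge0 psum_Xc.
  by [].
- move=> j j' Hj.
  have := Hv i j (ltn_ord i) (ltnW (ltn_ord j)).
  rewrite -Hj vval_S ?Hj // subr_ge0 !psum_Xc -Hj.
  by [].
- move=> j Hj.
  have := Hv i 0 (ltn_ord i) (leq0n _).
  rewrite vval_0 // subr_ge0 psum_Xc.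
  have -> : j = Ordinal Hm by apply: val_inj.
  by [].
Qed.


Definition isZ (R : realType) (r : R) := exists z : int, r = z%:~R.

Lemma isZ_add (R : realType) (u v : R) : isZ u -> isZ v -> isZ (u + v).
Proof. by move=> [z1 ->] [z2 ->]; exists (z1 + z2); rewrite intrD. Qed.
Lemma isZ_opp (R : realType) (u : R) : isZ u -> isZ (- u).
Proof. by move=> [z1 ->]; exists (- z1); rewrite intrN. Qed.
Lemma isZ_mul (R : realType) (u v : R) : isZ u -> isZ v -> isZ (u * v).
Proof. by move=> [z1 ->] [z2 ->]; exists (z1 * z2); rewrite intrM. Qed.
Lemma isZ_nat (R : realType) (k : nat) : isZ (k%:R : R).
Proof. by exists k%:Z. Qed.
Lemma isZ_0 (R : realType) : isZ (0 : R).
Proof. by exists 0. Qed.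
Lemma isZ_sum (R : realType) (I : finType) (P : pred I) (F : I -> R) :
  (forall i, P i -> isZ (F i)) -> isZ (\sum_(i | P i) F i).
Proof. move=> H; apply: (big_ind (@isZ R)) => //; [exact: isZ_0 | exact: isZ_add]. Qed.

Lemma sel2_int (R : realType) p q (x : 'I_p * 'I_q -> R) i j :
  (forall s, isZ (x s)) -> isZ (sel2 x i j).
Proof. by move=> H; apply: isZ_sum => s _; apply: isZ_mul; [exact: isZ_nat|]. Qed.

Lemma vval_int (R : realType) n m (a b : 'I_n -> nat) (x : 'I_n * 'I_m -> R) i j :
  (forall s, isZ (x s)) -> isZ (vval a b x i j).
Proof.
move=> H; rewrite /vval /Xp.
have HX : forall j, isZ (Xc x i j) by move=> j'; apply: isZ_sum => k _; exact: sel2_int.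
apply: isZ_add; last by apply: isZ_opp; apply: isZ_mul; exact: isZ_nat.
apply: isZ_add; last by apply: isZ_opp.
apply: isZ_add; first by apply: isZ_mul; exact: isZ_nat.
by case: j => [|j]; [exact: isZ_0|].
Qed.

Lemma affine_comb (R : realType) (T1 T2 : finType) (A : T2 -> T1 -> R) (c : T2 -> R)
  k (p : 'I_k -> T1 -> R) (l : 'I_k -> R) (x : T1 -> R) :
  \sum_(i < k) l i = 1 -> (forall t, x t = \sum_(i < k) l i * p i t) ->
  forall t, affine_map A c x t = \sum_(i < k) l i * affine_map A c (p i) t.
Proof.
move=> Hl Hx t; rewrite /affine_map.
under [RHS]eq_bigr do rewrite mulrDr.
rewrite big_split /= -mulr_suml Hl mul1r; congr (_ + _).
under eq_bigr do rewrite Hx mulr_sumr.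
rewrite exchange_big /=; apply: eq_bigr => i _; rewrite mulr_sumr.
by apply: eq_bigr => s _; rewrite mulrCA.
Qed.

Lemma lin_sum (R : realType) (T : finType) (P : pred T) k (l : 'I_k -> R)
  (q : 'I_k -> T -> R) (y : T -> R) :
  (forall t, y t = \sum_(i < k) l i * q i t) ->
  \sum_(t | P t) y t = \sum_(i < k) l i * \sum_(t | P t) q i t.
Proof.
move=> Hy; under eq_bigr do rewrite Hy.
rewrite exchange_big /=; apply: eq_bigr => i _; by rewrite mulr_sumr.
Qed.

Lemma cons_aff (R : realType) n m (a b : 'I_n -> nat) (y : edge n m -> R) :
  aff_span (@flow_polytope R n m a b) y ->
  forall v : option ('I_n * 'I_m.+1),
    \sum_(e : edge n m | etail e == vertex_of v) y e
    - \sum_(e : edge n m | ehead e == vertex_of v) y e = @netflow R n m a b v.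
Proof.
move=> [k [q [l [Hq [Hl Hy]]]]] v.
rewrite !(lin_sum _ Hy) -sumrB.
under eq_bigr do rewrite -mulrBr (proj2 (Hq _) v).
by rewrite -mulr_suml Hl mul1r.
Qed.

Lemma Q_P (R : realType) n m (a b : 'I_n -> nat) (y : edge n m -> R) :
  (0 < n)%N -> (0 < m)%N -> flow_polytope a b y -> PS a b (Psi y).
Proof.
move=> Hn Hm [Hy Hc].
apply: vval_PS => //.
  by move=> s; apply: Hy.
move=> i j Hi Hj.
have E := @fw_Psi R n m a b y Hm (fun i' j' => Hc (Some (i', j'))) i (Ordinal (Hj : (j < m.+1)%N)) Hi.
rewrite /= in E; rewrite -E.
rewrite /fw /fv /fs /sel2 /sel1.
apply: addr_ge0.
  by apply: sumr_ge0 => s _; apply: mulr_ge0 => //; apply: Hy.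
apply: mulr_ge0 => //; apply: sumr_ge0 => s _; apply: mulr_ge0 => //; apply: Hy.
Qed.


Lemma P_Q (R : realType) n m (a b : 'I_n -> nat) (x : 'I_n * 'I_m -> R) :
  (0 < n)%N -> (0 < m)%N -> PS a b x -> flow_polytope a b (Phi R a b x).
Proof.
move=> Hn Hm HP; split; last exact: Phi_flow.
move=> [[[i j]|[i j]]|j].
- rewrite Phi_h; exact: (proj1 HP).
- rewrite Phi_v; apply: PS_vval => //; last exact: (ltn_ord j).
  exact: leq_trans (ltn_ord i) (leq_pred n).
- rewrite Phi_s; apply: PS_vval => //; last exact: (ltn_ord j).
  by rewrite prednK.
Qed.

Lemma Phi_inj (R : realType) n m (a b : 'I_n -> nat) (x y : 'I_n * 'I_m -> R) :
  Phi R a b x =1 Phi R a b y -> x =1 y.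
Proof. by move=> H [i j]; have := H (inl (inl (i, j))); rewrite !Phi_h. Qed.

Theorem theorem3p4 (R : realType) (n m : nat) (a b : 'I_n -> nat) :
  (0 < n)%N -> (0 < m)%N ->
  integrally_equivalent (@PS R n m a b) (@flow_polytope R n m a b).
Proof.
move=> Hn Hm.
exists (@Acoef R n m), (cvec R a b).
change (affine_map (@Acoef R n m) (cvec R a b)) with (@Phi R n m a b).
split; [split; [|split] | split; [|split]].
- move=> x; exact: P_Q.
- by move=> x y _ _; apply: Phi_inj.
- move=> y Hy; exists (Psi y); first exact: Q_P.
  apply: Phi_Psi => // i j; exact: (proj2 Hy).
- move=> x [k [p [l [Hp [Hl Hx]]]]] Hint; split.
    exists k, (fun i => Phi R a b (p i)), l; split; [|split] => //.
      by move=> i; apply: P_Q.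
    exact: affine_comb.
  move=> [[[i j]|[i j]]|j].
  + by rewrite Phi_h; apply: Hint.
  + by rewrite Phi_v; apply: vval_int.
  + by rewrite Phi_s; apply: vval_int.
- by move=> x y _ _ _ _; apply: Phi_inj.
- move=> y Hy Hint; exists (Psi y); last first.
    apply: Phi_Psi => // i j; exact: (cons_aff Hy).
  split; last by move=> s; apply: Hint.
  move: Hy => [k [q [l [Hq [Hl Hy]]]]].
  exists k, (fun i => Psi (q i)), l; split; [|split] => //.
    by move=> i; apply: Q_P.
  by move=> s; rewrite /Psi Hy.
Qed.
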